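(* Let $d_0$ and $d_1$ be metrics on $\omega$. The following are equivalent: (1) the completions of $\langle\omega,d_0\rangle$ and $\langle\omega,d_1\rangle$ are isometrically isomorphic Polish metric spaces; (2) there is a metric $d^*$ on $\omega$ and, for each $e\in\{0,1\}$, a dense isometry $\iota_e:\langle\omega,d_e\rangle\to\langle\omega,d^*\rangle$.
   Context: An isometry is a distance-preserving map (not necessarily onto); an isometrical isomorphism is an onto isometry; a dense isometry is an isometry with dense image. A completion of a metric space $\langle X,d\rangle$ is a complete metric space $\langle X^*,d^*\rangle$ together with a dense isometry $\langle X,d\rangle\to\langle X^*,d^*\rangle$. *)

(* Defs.v *)
From Stdlib Require Import Reals.
Open Scope R_scope.

Definition is_metric {X : Type} (d : X -> X -> R) : Prop :=
  (forall x y, 0 <= d x y) /\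
  (forall x y, d x y = 0 <-> x = y) /\
  (forall x y, d x y = d y x) /\
  (forall x y z, d x z <= d x y + d y z).

Definition isometry {X Y : Type} (dX : X -> X -> R) (dY : Y -> Y -> R)
  (f : X -> Y) : Prop :=
  forall x x', dY (f x) (f x') = dX x x'.

Definition isometric_isomorphism {X Y : Type} (dX : X -> X -> R)
  (dY : Y -> Y -> R) (f : X -> Y) : Prop :=
  isometry dX dY f /\ (forall y, exists x, f x = y).

Definition dense_set {Y : Type} (dY : Y -> Y -> R) (S : Y -> Prop) : Prop :=
  forall y eps, 0 < eps -> exists s, S s /\ dY y s < eps.

Definition dense_isometry {X Y : Type} (dX : X -> X -> R) (dY : Y -> Y -> R)
  (f : X -> Y) : Prop :=
  isometry dX dY f /\ dense_set dY (fun y => exists x, f x = y).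

Definition cauchy_seq {X : Type} (d : X -> X -> R) (u : nat -> X) : Prop :=
  forall eps, 0 < eps -> exists N, forall m n, (N <= m)%nat -> (N <= n)%nat ->
    d (u m) (u n) < eps.

Definition converges_to {X : Type} (d : X -> X -> R) (u : nat -> X) (x : X) : Prop :=
  forall eps, 0 < eps -> exists N, forall n, (N <= n)%nat -> d (u n) x < eps.

Definition complete {X : Type} (d : X -> X -> R) : Prop :=
  forall u, cauchy_seq d u -> exists x, converges_to d u x.

Definition separable {X : Type} (d : X -> X -> R) : Prop :=
  exists s : nat -> X, dense_set d (fun y => exists n, s n = y).

Definition is_completion {X Xs : Type} (d : X -> X -> R) (ds : Xs -> Xs -> R)
  (iota : X -> Xs) : Prop :=
  is_metric ds /\ complete ds /\ dense_isometry d ds iota.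

Definition polish_metric {X : Type} (d : X -> X -> R) : Prop :=
  is_metric d /\ complete d /\ separable d.

(* Main.v *)
Require Import Defs.
From Stdlib Require Import ZArith Reals Lra Lia List Arith ClassicalEpsilon ProofIrrelevance FunctionalExtensionality.
Open Scope R_scope.

Lemma archi (eps : R) : 0 < eps -> exists N, forall n, (N <= n)%nat -> / INR (S n) < eps.
Proof.
  intros He.
  destruct (archimed (/ eps)) as [H1 _].
  assert (Hp : 0 < / eps) by (apply Rinv_0_lt_compat; lra).
  assert (Hz : (0 <= up (/ eps))%Z).
  { apply le_IZR. lra. }
  exists (Z.to_nat (up (/ eps))). intros n Hn.
  assert (HI : IZR (up (/eps)) <= INR n).
  { rewrite <- (Z2Nat.id (up (/eps))) by exact Hz. rewrite <- INR_IZR_INZ. apply le_INR. exact Hn. }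
  rewrite S_INR.
  rewrite <- (Rinv_inv eps).
  apply Rinv_lt_contravar. { apply Rmult_lt_0_compat; lra. } lra.
Qed.

Lemma inv_pos (n : nat) : 0 < / INR (S n).
Proof. apply Rinv_0_lt_compat. apply lt_0_INR. lia. Qed.

Lemma le_eps (a b : R) : (forall eps, 0 < eps -> a <= b + eps) -> a <= b.
Proof.
  intros H. destruct (Rle_or_lt a b) as [h|h]; auto.
  specialize (H ((a - b)/2)). lra.
Qed.

Lemma lim_le (v : nat -> R) l c : Un_cv v l -> (exists N, forall k, (N <= k)%nat -> v k <= c) -> l <= c.
Proof.
  intros Hv [N HN]. apply le_eps. intros eps He.
  destruct (Hv eps He) as [N' HN'].
  specialize (HN (max N N') ltac:(lia)). specialize (HN' (max N N') ltac:(lia)).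
  unfold R_dist in HN'. apply Rabs_def2 in HN'. lra.
Qed.

Lemma lim_ge (v : nat -> R) l c : Un_cv v l -> (exists N, forall k, (N <= k)%nat -> c <= v k) -> c <= l.
Proof.
  intros Hv [N HN]. apply le_eps. intros eps He.
  destruct (Hv eps He) as [N' HN'].
  specialize (HN (max N N') ltac:(lia)). specialize (HN' (max N N') ltac:(lia)).
  unfold R_dist in HN'. apply Rabs_def2 in HN'. lra.
Qed.

Lemma cv_const c : Un_cv (fun _ => c) c.
Proof. intros eps He. exists 0%nat. intros. unfold R_dist. rewrite Rminus_diag, Rabs_R0. lra. Qed.

Lemma cv_ext (a b : nat -> R) l : (forall k, a k = b k) -> Un_cv a l -> Un_cv b l.
Proof. intros H Ha eps He. destruct (Ha eps He) as [N HN]. exists N. intros n Hn. rewrite <- H. auto. Qed.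

Lemma cv_squeeze (a b e : nat -> R) l : Un_cv a l -> Un_cv e 0 ->
  (forall k, Rabs (b k - a k) <= e k) -> Un_cv b l.
Proof.
  intros Ha He H eps Heps.
  destruct (Ha (eps/2) ltac:(lra)) as [N1 H1].
  destruct (He (eps/2) ltac:(lra)) as [N2 H2].
  exists (max N1 N2). intros n Hn.
  specialize (H1 n ltac:(lia)). specialize (H2 n ltac:(lia)). specialize (H n).
  unfold R_dist in *. rewrite Rminus_0_r in H2.
  apply Rabs_def2 in H1. apply Rabs_def2 in H2.
  pose proof (Rle_abs (b n - a n)). pose proof (Rle_abs (-(b n - a n))).
  rewrite Rabs_Ropp in *.
  apply Rabs_def1; lra.
Qed.

Definition Rlim (v : nat -> R) : R := epsilon (inhabits 0) (fun l => Un_cv v l).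

Lemma Rlim_spec v : Cauchy_crit v -> Un_cv v (Rlim v).
Proof.
  intros H. unfold Rlim. apply epsilon_spec.
  destruct (R_complete v H) as [l Hl]. exists l; exact Hl.
Qed.

Lemma dist_diff {X} (d : X -> X -> R) : is_metric d -> forall a b c e,
  Rabs (d a b - d c e) <= d a c + d b e.
Proof.
  intros [Hn [Hz [Hs Ht]]] a b c e.
  pose proof (Ht a c b). pose proof (Ht c e b). pose proof (Ht c a e). pose proof (Ht a b e).
  rewrite (Hs c a) in *. rewrite (Hs e b) in *.
  apply Rabs_le. lra.
Qed.

Definition rep (d : nat -> nat -> R) (u : nat -> nat) (phi : nat -> R) : Prop :=
  cauchy_seq d u /\ forall n, Un_cv (fun k => d (u k) n) (phi n).

Definition Cpt (d : nat -> nat -> R) := {phi : nat -> R | exists u, rep d u phi}.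

Definition ru (d : nat -> nat -> R) (x : Cpt d) : nat -> nat :=
  epsilon (inhabits (fun _ => 0%nat)) (fun u => rep d u (proj1_sig x)).

Definition dC (d : nat -> nat -> R) (x y : Cpt d) : R :=
  Rlim (fun k => d (ru d x k) (ru d y k)).

Lemma ru_spec d x : rep d (ru d x) (proj1_sig x).
Proof. unfold ru. apply epsilon_spec. exact (proj2_sig x). Qed.

Lemma cauchy_pair (d : nat -> nat -> R) : is_metric d -> forall (u v : nat -> nat), cauchy_seq d u -> cauchy_seq d v ->
  Cauchy_crit (fun k => d (u k) (v k)).
Proof.
  intros hd u v Hu Hv eps He.
  destruct (Hu (eps/2) ltac:(lra)) as [N1 H1].
  destruct (Hv (eps/2) ltac:(lra)) as [N2 H2].
  exists (max N1 N2). intros n m Hn Hm. unfold R_dist.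
  eapply Rle_lt_trans. apply dist_diff; exact hd.
  specialize (H1 n m ltac:(lia) ltac:(lia)). specialize (H2 n m ltac:(lia) ltac:(lia)). lra.
Qed.

Lemma same_rep (d : nat -> nat -> R) : is_metric d -> forall u u' phi, rep d u phi -> rep d u' phi ->
  Un_cv (fun k => d (u k) (u' k)) 0.
Proof.
  intros hd u u' phi [Hu Hcu] [Hu' Hcu'] eps He.
  destruct hd as [Hn [Hz [Hs Ht]]].
  destruct (Hu (eps/3) ltac:(lra)) as [N HN].
  assert (Hp : phi (u N) <= eps/3).
  { apply (lim_le _ _ _ (Hcu (u N))). exists N. intros k Hk. left. apply HN; lia. }
  destruct (Hcu' (u N) (eps/3) ltac:(lra)) as [N2 H2].
  exists (max N N2). intros k Hk. unfold R_dist. rewrite Rminus_0_r.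
  rewrite Rabs_right by (apply Rle_ge; apply Hn).
  specialize (H2 k ltac:(lia)). unfold R_dist in H2. apply Rabs_def2 in H2.
  specialize (HN k N ltac:(lia) ltac:(lia)).
  pose proof (Ht (u k) (u N) (u' k)). rewrite (Hs (u N) (u' k)) in *. lra.
Qed.

Lemma KEY (d : nat -> nat -> R) : is_metric d -> forall (x y : Cpt d) u v, rep d u (proj1_sig x) -> rep d v (proj1_sig y) ->
  Un_cv (fun k => d (u k) (v k)) (dC d x y).
Proof.
  intros hd x y u v Hu Hv.
  pose proof (ru_spec d x) as Hx. pose proof (ru_spec d y) as Hy.
  apply (cv_squeeze (fun k => d (ru d x k) (ru d y k)) _ (fun k => d (u k) (ru d x k) + d (v k) (ru d y k))).
  - unfold dC. apply Rlim_spec. apply cauchy_pair; auto. apply Hx. apply Hy.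
  - replace 0 with (0 + 0) by lra. apply CV_plus; eapply same_rep; eauto.
  - intros k. apply dist_diff; auto.
Qed.

Lemma rep_const (d : nat -> nat -> R) : is_metric d -> forall n, rep d (fun _ => n) (fun m => d n m).
Proof.
  intros hd n. split.
  - intros eps He. exists 0%nat. intros. destruct hd as [_ [Hz _]]. rewrite (proj2 (Hz n n) eq_refl). lra.
  - intros m. apply cv_const.
Qed.

Definition jC d (hd : is_metric d) (n : nat) : Cpt d :=
  exist _ (fun m => d n m) (ex_intro _ (fun _ => n) (rep_const d hd n)).

Lemma dC_j (d : nat -> nat -> R) (hd : is_metric d) n m : dC d (jC d hd n) (jC d hd m) = d n m.
Proof.
  pose proof (KEY d hd (jC d hd n) (jC d hd m) _ _ (rep_const d hd n) (rep_const d hd m)).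
  eapply UL_sequence. exact H. exact (cv_const (d n m)).
Qed.

Lemma dC_jx (d : nat -> nat -> R) (hd : is_metric d) (x : Cpt d) u n : rep d u (proj1_sig x) ->
  Un_cv (fun k => d (u k) n) (dC d x (jC d hd n)).
Proof. intros Hu. exact (KEY d hd x (jC d hd n) u _ Hu (rep_const d hd n)). Qed.

Lemma dC_metric (d : nat -> nat -> R) : is_metric d -> is_metric (dC d).
Proof.
  intros hd. pose proof hd as [Hn [Hz [Hs Ht]]].
  split; [|split; [|split]].
  - intros x y. apply (lim_ge _ _ _ (KEY d hd x y _ _ (ru_spec d x) (ru_spec d y))).
    exists 0%nat. intros. apply Hn.
  - intros x y. split.
    + destruct x as [phi Hphi], y as [psi Hpsi]. intros H0.
      destruct Hphi as [u Hu]. destruct Hpsi as [v Hv].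
      pose proof (KEY d hd (exist _ phi (ex_intro _ u Hu)) (exist _ psi (ex_intro _ v Hv)) u v Hu Hv) as HK.
      simpl in HK. rewrite H0 in HK.
      assert (phi = psi).
      { apply functional_extensionality. intros n.
        eapply UL_sequence. 2: apply (proj2 Hv n).
        apply (cv_squeeze (fun k => d (u k) n) _ (fun k => d (v k) (u k) + d n n)).
        - apply (proj2 Hu n).
        - assert (E : Un_cv (fun k => d (v k) (u k) + d n n) (0 + d n n)).
          { apply CV_plus. eapply cv_ext. 2: exact HK. intros; simpl; apply Hs. apply cv_const. }
          rewrite (proj2 (Hz n n) eq_refl), Rplus_0_r in E at 1. exact E.
        - intros k. apply dist_diff; auto. }
      subst psi. f_equal. apply proof_irrelevance.
    + intros <-. eapply UL_sequence. apply (KEY d hd x x _ _ (ru_spec d x) (ru_spec d x)).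
      eapply cv_ext. 2: apply (cv_const 0). intros k. symmetry. apply Hz. reflexivity.
  - intros x y. eapply UL_sequence. apply (KEY d hd x y _ _ (ru_spec d x) (ru_spec d y)).
    eapply cv_ext. 2: apply (KEY d hd y x _ _ (ru_spec d y) (ru_spec d x)). intros; simpl; apply Hs.
  - intros x y z.
    pose proof (KEY d hd x y _ _ (ru_spec d x) (ru_spec d y)) as H1.
    pose proof (KEY d hd y z _ _ (ru_spec d y) (ru_spec d z)) as H2.
    pose proof (KEY d hd x z _ _ (ru_spec d x) (ru_spec d z)) as H3.
    pose proof (CV_minus _ _ _ _ (CV_plus _ _ _ _ H1 H2) H3) as H4.
    apply lim_ge with (c := 0) in H4. lra.
    exists 0%nat. intros k _. simpl. pose proof (Ht (ru d x k) (ru d y k) (ru d z k)). lra.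
Qed.

Lemma dC_dense (d : nat -> nat -> R) (hd : is_metric d) : dense_set (dC d) (fun y => exists n, jC d hd n = y).
Proof.
  intros x eps He. pose proof (ru_spec d x) as Hu.
  destruct (proj1 Hu (eps/2) ltac:(lra)) as [N HN].
  exists (jC d hd (ru d x N)). split. eauto.
  assert (dC d x (jC d hd (ru d x N)) <= eps/2).
  { apply (lim_le _ _ _ (dC_jx d hd x _ _ Hu)). exists N. intros k Hk. left. apply HN; lia. }
  lra.
Qed.

Lemma dC_complete (d : nat -> nat -> R) (hd : is_metric d) : complete (dC d).
Proof.
  intros X HX.
  pose proof (dC_metric d hd) as hC. pose proof hC as [Cn [Cz [Cs Ct]]].
  pose (w := fun k => epsilon (inhabits 0%nat) (fun n => dC d (X k) (jC d hd n) < / INR (S k))).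
  assert (Hw : forall k, dC d (X k) (jC d hd (w k)) < / INR (S k)).
  { intros k. unfold w. apply epsilon_spec.
    destruct (dC_dense d hd (X k) (/ INR (S k)) (inv_pos k)) as [s [[n <-] Hs]]. eauto. }
  assert (Hwc : cauchy_seq d w).
  { intros eps He.
    destruct (HX (eps/3) ltac:(lra)) as [N1 H1].
    destruct (archi (eps/3) ltac:(lra)) as [N2 H2].
    exists (max N1 N2). intros m n Hm Hn.
    rewrite <- dC_j with (hd := hd).
    pose proof (Ct (jC d hd (w m)) (X m) (jC d hd (w n))).
    pose proof (Ct (X m) (X n) (jC d hd (w n))).
    rewrite (Cs (jC d hd (w m)) (X m)) in *.
    specialize (H1 m n ltac:(lia) ltac:(lia)). pose proof (H2 m ltac:(lia)). pose proof (H2 n ltac:(lia)).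
    pose proof (Hw m). pose proof (Hw n). lra. }
  assert (Hrep : rep d w (fun m => Rlim (fun k => d (w k) m))).
  { split. exact Hwc. intros m. apply Rlim_spec. apply (cauchy_pair d hd w (fun _ => m)); auto.
    apply (proj1 (rep_const d hd m)). }
  exists (exist _ _ (ex_intro _ w Hrep)).
  intros eps He.
  destruct (Hwc (eps/3) ltac:(lra)) as [N1 H1].
  destruct (archi (eps/3) ltac:(lra)) as [N2 H2].
  exists (max N1 N2). intros k Hk.
  pose proof (dC_jx d hd (exist _ _ (ex_intro _ w Hrep)) w (w k) Hrep) as HL.
  apply lim_le with (c := eps/3) in HL.
  2:{ exists N1. intros l Hl. left. apply H1; lia. }
  pose proof (Ct (X k) (jC d hd (w k)) (exist _ _ (ex_intro _ w Hrep))).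
  rewrite (Cs (jC d hd (w k))) in *. pose proof (Hw k). specialize (H2 k ltac:(lia)). lra.
Qed.

Lemma completion_exists d (hd : is_metric d) : is_completion d (dC d) (jC d hd).
Proof.
  refine (conj (dC_metric d hd) (conj (dC_complete d hd) (conj _ (dC_dense d hd)))).
  intros n m. apply dC_j.
Qed.

Lemma conv_cv {X} (d : X -> X -> R) u y : is_metric d -> converges_to d u y ->
  Un_cv (fun k => d (u k) y) 0.
Proof.
  intros [Hn _] H eps He. destruct (H eps He) as [N HN]. exists N. intros n Hn'.
  unfold R_dist. rewrite Rminus_0_r, Rabs_right by (apply Rle_ge, Hn). apply HN. lia.
Qed.

Lemma CD {X} (d : X -> X -> R) u y x : is_metric d -> converges_to d u y ->
  Un_cv (fun k => d x (u k)) (d x y).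
Proof.
  intros hd H. pose proof hd as [Hn [Hz [Hs Ht]]].
  apply (cv_squeeze (fun _ => d x y) _ (fun k => d (u k) y + d x x)).
  - apply cv_const.
  - assert (E : Un_cv (fun k => d (u k) y + d x x) (0 + d x x)).
    { apply CV_plus. apply conv_cv; auto. apply cv_const. }
    rewrite (proj2 (Hz x x) eq_refl), Rplus_0_r in E at 1. exact E.
  - intros k. eapply Rle_trans. apply dist_diff; auto. rewrite Rplus_comm. apply Req_le. reflexivity.
Qed.

Lemma metric_zero {X} (d : X -> X -> R) x y : is_metric d ->
  (forall eps, 0 < eps -> d x y <= eps) -> x = y.
Proof.
  intros [Hn [Hz _]] H. apply Hz. apply Rle_antisym. 2: apply Hn.
  apply le_eps. intros. rewrite Rplus_0_l. auto.
Qed.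

Lemma ext_iso {A B Y : Type} (dA : A -> A -> R) (dB : B -> B -> R) (dY : Y -> Y -> R)
  (e : A -> B) (g : A -> Y) :
  is_metric dB -> is_metric dY -> complete dY -> dense_isometry dA dB e -> isometry dA dY g ->
  exists G : B -> Y, isometry dB dY G /\ (forall a, G (e a) = g a).
Proof.
  intros hB hY cY [ie de] ig.
  pose proof hB as [Bn [Bz [Bs Bt]]]. pose proof hY as [Yn [Yz [Ys Yt]]].
  assert (Ha : forall b k, exists a, dB b (e a) < / INR (S k)).
  { intros b k. destruct (de b _ (inv_pos k)) as [s [[a <-] H]]. eauto. }
  pose (a := fun b k => proj1_sig (constructive_indefinite_description _ (Ha b k))).
  assert (Ha' : forall b k, dB b (e (a b k)) < / INR (S k)).
  { intros b k. exact (proj2_sig (constructive_indefinite_description _ (Ha b k))). }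
  assert (Hconv : forall b, converges_to dB (fun k => e (a b k)) b).
  { intros b eps He. destruct (archi eps He) as [N HN]. exists N. intros n Hn.
    rewrite Bs. specialize (Ha' b n). specialize (HN n Hn). lra. }
  assert (Hc : forall b, cauchy_seq dY (fun k => g (a b k))).
  { intros b eps He. destruct (archi (eps/2) ltac:(lra)) as [N HN]. exists N. intros m n Hm Hn.
    rewrite ig, <- ie. pose proof (Bt (e (a b m)) b (e (a b n))). rewrite (Bs (e (a b m)) b) in H.
    pose proof (Ha' b m). pose proof (Ha' b n). pose proof (HN m Hm). pose proof (HN n Hn). lra. }
  assert (Hl : forall b, exists y, converges_to dY (fun k => g (a b k)) y).
  { intros b. apply cY. apply Hc. }
  pose (G := fun b => proj1_sig (constructive_indefinite_description _ (Hl b))).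
  assert (HG : forall b, converges_to dY (fun k => g (a b k)) (G b)).
  { intros b. exact (proj2_sig (constructive_indefinite_description _ (Hl b))). }
  assert (Mx : forall b a0, dY (G b) (g a0) = dB b (e a0)).
  { intros b a0. rewrite Ys, Bs.
    eapply UL_sequence. apply (CD dY _ _ (g a0) hY (HG b)).
    eapply cv_ext. 2: apply (CD dB _ _ (e a0) hB (Hconv b)).
    intros k. simpl. rewrite ig, ie. reflexivity. }
  exists G. split.
  - intros b b'. eapply UL_sequence. apply (CD dY _ _ (G b) hY (HG b')).
    eapply cv_ext. 2: apply (CD dB _ _ b hB (Hconv b')).
    intros k. simpl. rewrite Mx. reflexivity.
  - intros a0. apply Yz. rewrite Mx. apply Bz. reflexivity.
Qed.

Lemma onto_ext {A B Y : Type} (dA : A -> A -> R) (dB : B -> B -> R) (dY : Y -> Y -> R)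
  (e : A -> B) (g : A -> Y) (G : B -> Y) :
  is_metric dB -> is_metric dY -> complete dB -> isometry dB dY G -> (forall a, G (e a) = g a) ->
  dense_set dY (fun y => exists a, g a = y) -> forall y, exists b, G b = y.
Proof.
  intros hB hY cB iG HGe dg y.
  pose proof hB as [Bn [Bz [Bs Bt]]]. pose proof hY as [Yn [Yz [Ys Yt]]].
  assert (Ha : forall k, exists a, dY y (g a) < / INR (S k)).
  { intros k. destruct (dg y _ (inv_pos k)) as [s [[a <-] H]]. eauto. }
  pose (a := fun k => proj1_sig (constructive_indefinite_description _ (Ha k))).
  assert (Ha' : forall k, dY y (g (a k)) < / INR (S k)).
  { intros k. exact (proj2_sig (constructive_indefinite_description _ (Ha k))). }
  assert (Hc : cauchy_seq dB (fun k => e (a k))).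
  { intros eps He. destruct (archi (eps/2) ltac:(lra)) as [N HN]. exists N. intros m n Hm Hn.
    rewrite <- iG, !HGe. pose proof (Yt (g (a m)) y (g (a n))). rewrite (Ys (g (a m)) y) in H.
    pose proof (Ha' m). pose proof (Ha' n). pose proof (HN m Hm). pose proof (HN n Hn). lra. }
  destruct (cB _ Hc) as [b Hb]. exists b.
  apply (metric_zero dY); auto. intros eps He.
  destruct (Hb (eps/2) ltac:(lra)) as [N1 H1]. destruct (archi (eps/2) ltac:(lra)) as [N2 H2].
  pose (k := max N1 N2).
  pose proof (Yt (G b) (G (e (a k))) y). rewrite iG, HGe, (Ys (g (a k)) y), Bs in H.
  pose proof (H1 k ltac:(lia)). pose proof (H2 k ltac:(lia)). pose proof (Ha' k). simpl in *. lra.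
Qed.

Definition pick {X} (h : nat -> X) (l : list X) : nat :=
  epsilon (inhabits 0%nat) (fun j => ~ In (h j) l /\ forall j', (j' < j)%nat -> In (h j') l).

Fixpoint pre {X} (h : nat -> X) (k : nat) : list X :=
  match k with
  | O => nil
  | S k => pre h k ++ h (pick h (pre h k)) :: nil
  end.

Lemma least_ex {X} (h : nat -> X) (l : list X) : (exists j, ~ In (h j) l) ->
  exists j, ~ In (h j) l /\ forall j', (j' < j)%nat -> In (h j') l.
Proof.
  intros [j0 H0]. revert H0. induction j0 as [j0 IH] using lt_wf_ind. intros H0.
  destruct (classic (forall j', (j' < j0)%nat -> In (h j') l)) as [Hall|Hn].
  - eauto.
  - apply not_all_ex_not in Hn. destruct Hn as [j' Hj'].
    apply imply_to_and in Hj'. destruct Hj'. eapply IH; eauto.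
Qed.

Lemma enum {X} (h : nat -> X) : (forall l : list X, exists j, ~ In (h j) l) ->
  exists g : nat -> X, (forall a b, g a = g b -> a = b) /\ (forall a, exists j, g a = h j)
    /\ (forall j, exists a, g a = h j).
Proof.
  intros Hinf.
  assert (Hp : forall l, ~ In (h (pick h l)) l /\ forall j', (j' < pick h l)%nat -> In (h j') l).
  { intros l. unfold pick. apply epsilon_spec. apply least_ex. auto. }
  pose (g := fun k => h (pick h (pre h k))).
  assert (Hin : forall k x, In x (pre h k) <-> exists a, (a < k)%nat /\ g a = x).
  { induction k as [|k IH]; intros x; simpl.
    - split. tauto. intros [a [Ha _]]. lia.
    - rewrite in_app_iff, IH. simpl. split.
      + intros [[a [Ha Hg]]|[Hx|[]]]. exists a. split; auto.
        exists k. split; auto.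
      + intros [a [Ha Hg]]. destruct (Nat.eq_dec a k) as [->|Hne]. right. left. auto.
        left. exists a. split; auto. lia. }
  exists g. split; [|split].
  - intros a b Hab.
    assert (Hlt : forall a b, (a < b)%nat -> g a <> g b).
    { intros a' b' Hl He. apply (proj1 (Hp (pre h b'))). fold (g b'). rewrite <- He.
      apply Hin. eauto. }
    destruct (lt_eq_lt_dec a b) as [[H|H]|H]; auto.
    exfalso; eapply Hlt; eauto. exfalso; eapply Hlt; eauto.
  - intros a. exists (pick h (pre h a)). reflexivity.
  - assert (Q : forall k j, (j < k)%nat -> In (h j) (pre h k)).
    { induction k as [|k IH]; intros j Hj. lia. simpl. apply in_app_iff.
      destruct (Nat.eq_dec j k) as [->|Hne]. 2:{ left. apply IH. lia. }
      destruct (classic (In (h k) (pre h k))) as [Hk|Hk]. left; auto.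
      right. left. destruct (Hp (pre h k)) as [P1 P2].
      assert (pick h (pre h k) = k).
      { destruct (lt_eq_lt_dec (pick h (pre h k)) k) as [[H|H]|H]; auto.
        - exfalso. apply P1. apply IH. auto.
        - exfalso. apply Hk. apply P2. auto. }
      rewrite H. reflexivity. }
    intros j. destruct (proj1 (Hin (S j) (h j)) (Q (S j) j ltac:(lia))) as [a [_ Ha]]. eauto.
Qed.

Lemma isom_inj {X} (d0 : nat -> nat -> R) (dX : X -> X -> R) k0 :
  is_metric d0 -> is_metric dX -> isometry d0 dX k0 -> forall n m, k0 n = k0 m -> n = m.
Proof.
  intros [_ [H0 _]] [_ [HX _]] Hk n m E. apply H0. rewrite <- Hk, E. apply HX. reflexivity.
Qed.

Lemma infinite_img {X} (k0 : nat -> X) : (forall n m, k0 n = k0 m -> n = m) ->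
  forall l : list X, exists n, ~ In (k0 n) l.
Proof.
  intros Hi l. apply not_all_not_ex. intros Hall.
  assert (Hincl : incl (map k0 (seq 0 (S (length l)))) l).
  { intros x Hx. apply in_map_iff in Hx. destruct Hx as [n [<- _]].
    destruct (classic (In (k0 n) l)); auto. exfalso; eapply Hall; eauto. }
  apply NoDup_incl_length in Hincl.
  - rewrite length_map, length_seq in Hincl. lia.
  - apply NoDup_map_NoDup_ForallPairs. intros a b _ _. apply Hi. apply seq_NoDup.
Qed.

Lemma merge_lemma {X} (d0 d1 : nat -> nat -> R) (dX : X -> X -> R) (k0 k1 : nat -> X) :
  is_metric d0 -> is_metric dX ->
  dense_isometry d0 dX k0 -> dense_isometry d1 dX k1 ->
  exists ds : nat -> nat -> R, is_metric ds /\
     exists i0 i1 : nat -> nat,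
       dense_isometry d0 ds i0 /\ dense_isometry d1 ds i1.
Proof.
  intros hd0 hX [ik0 dk0] [ik1 dk1].
  pose (h := fun j => if Nat.even j then k0 (Nat.div2 j) else k1 (Nat.div2 j)).
  assert (h0 : forall n, h (2 * n)%nat = k0 n).
  { intros n. unfold h. rewrite Nat.even_even, Nat.div2_double. reflexivity. }
  assert (h1 : forall n, h (2 * n + 1)%nat = k1 n).
  { intros n. unfold h. rewrite Nat.even_odd, Nat.div2_odd'. reflexivity. }
  destruct (enum h) as [g [gi [gh hg]]].
  { intros l. destruct (infinite_img k0 (isom_inj d0 dX k0 hd0 hX ik0) l) as [n Hn].
    exists (2 * n)%nat. rewrite h0. auto. }
  pose proof hX as [Xn [Xz [Xs Xt]]].
  exists (fun a b => dX (g a) (g b)). split.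
  { split; [|split; [|split]]; intros; auto.
    split. intros H. apply gi. apply Xz. auto. intros ->. apply Xz. reflexivity. }
  assert (E0 : forall n, exists a, g a = k0 n).
  { intros n. destruct (hg (2 * n)%nat) as [a Ha]. rewrite h0 in Ha. eauto. }
  assert (E1 : forall n, exists a, g a = k1 n).
  { intros n. destruct (hg (2 * n + 1)%nat) as [a Ha]. rewrite h1 in Ha. eauto. }
  pose (i0 := fun n => proj1_sig (constructive_indefinite_description _ (E0 n))).
  pose (i1 := fun n => proj1_sig (constructive_indefinite_description _ (E1 n))).
  assert (I0 : forall n, g (i0 n) = k0 n).
  { intros n. exact (proj2_sig (constructive_indefinite_description _ (E0 n))). }
  assert (I1 : forall n, g (i1 n) = k1 n).
  { intros n. exact (proj2_sig (constructive_indefinite_description _ (E1 n))). }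
  exists i0, i1. split; split.
  - intros n m. rewrite !I0. apply ik0.
  - intros a eps He. destruct (dk0 (g a) eps He) as [s [[n <-] Hs]].
    exists (i0 n). split. eauto. rewrite I0. auto.
  - intros n m. rewrite !I1. apply ik1.
  - intros a eps He. destruct (dk1 (g a) eps He) as [s [[n <-] Hs]].
    exists (i1 n). split. eauto. rewrite I1. auto.
Qed.

Theorem corollary3p4 (d0 d1 : nat -> nat -> R)
  (hd0 : is_metric d0) (hd1 : is_metric d1) :
  (forall (X0 : Type) (ds0 : X0 -> X0 -> R) (i0 : nat -> X0)
          (X1 : Type) (ds1 : X1 -> X1 -> R) (i1 : nat -> X1),
      is_completion d0 ds0 i0 -> is_completion d1 ds1 i1 ->
      polish_metric ds0 /\ polish_metric ds1 /\
      exists f : X0 -> X1, isometric_isomorphism ds0 ds1 f)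
  <->
  (exists ds : nat -> nat -> R, is_metric ds /\
     exists i0 i1 : nat -> nat,
       dense_isometry d0 ds i0 /\ dense_isometry d1 ds i1).
Proof.
  split.
  - intros H.
    pose proof (completion_exists d0 hd0) as C0. pose proof (completion_exists d1 hd1) as C1.
    destruct (H _ _ _ _ _ _ C0 C1) as [_ [_ [f [fi fo]]]].
    pose (finv := fun y => proj1_sig (constructive_indefinite_description _ (fo y))).
    assert (Hf : forall y, f (finv y) = y).
    { intros y. exact (proj2_sig (constructive_indefinite_description _ (fo y))). }
    apply (merge_lemma d0 d1 (dC d0) (jC d0 hd0) (fun n => finv (jC d1 hd1 n)) hd0 (proj1 C0)
             (proj2 (proj2 C0))).
    destruct C1 as [_ [_ [ij1 dj1]]]. split.
    + intros n m. rewrite <- fi, !Hf. apply ij1.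
    + intros x eps He. destruct (dj1 (f x) eps He) as [s [[m <-] Hs]].
      exists (finv (jC d1 hd1 m)). split. eauto. rewrite <- fi, Hf. exact Hs.
  - intros [ds [hds [i0 [i1 [Di0 Di1]]]]].
    intros X0 ds0 j0 X1 ds1 j1 [m0 [c0 [ij0 dj0]]] [m1 [c1 [ij1 dj1]]].
    split. { split; [exact m0|split; [exact c0|exists j0; exact dj0]]. }
    split. { split; [exact m1|split; [exact c1|exists j1; exact dj1]]. }
    destruct (ext_iso d1 ds ds1 i1 j1 hds m1 c1 Di1 ij1) as [phi [iphi phij]].
    assert (ig : isometry d0 ds1 (fun n => phi (i0 n))).
    { intros n m. simpl. rewrite iphi. apply (proj1 Di0). }
    destruct (ext_iso d0 ds0 ds1 j0 (fun n => phi (i0 n)) m0 m1 c1 (conj ij0 dj0) ig) as [F [iF Fj]].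
    exists F. split. exact iF.
    apply (onto_ext d0 ds0 ds1 j0 (fun n => phi (i0 n)) F m0 m1 c0 iF Fj).
    intros y eps He.
    destruct (dj1 y (eps/2) ltac:(lra)) as [s [[m <-] Hs]].
    destruct (proj2 Di0 (i1 m) (eps/2) ltac:(lra)) as [s' [[n <-] Hs']].
    exists (phi (i0 n)). split. eauto.
    destruct m1 as [_ [_ [_ Yt]]].
    pose proof (Yt y (j1 m) (phi (i0 n))). rewrite <- phij, iphi in H. rewrite <- phij in Hs. lra.
Qed.
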